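(* Let $\mathfrak m\in\mathbf R$, $\overline{\mathfrak m}=\max\{\mathfrak m,0\}$, $\lambda>0$, $\varepsilon>0$, $t>0$ and $m\ge1$ an integer. Define, with the convention $s_{m+1}=s_1$, $$\Phi_m(s_1,\dots,s_m)=\prod_{k=1}^m\frac{\lambda^2e^{\mathfrak m(s_k+s_{k+1})}}{2\pi(s_k+s_{k+1}+2\varepsilon^2)}.$$ Then $$\int_{[0,t]^m}\Phi_m(s_1,\dots,s_m)\,ds_1\cdots ds_m\le\frac{(\lambda e^{\overline{\mathfrak m}t})^{2m}}{2^m\pi}\log\Big(1+\frac{t}{\varepsilon^2}\Big).$$ *)

(* Defs.v *)
From HB Require Import structures.
From mathcomp Require Import all_boot all_order all_algebra.
From mathcomp Require Import all_classical all_reals all_analysis.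
Set Implicit Arguments. Unset Strict Implicit. Unset Printing Implicit Defensive.
Import Order.TTheory GRing.Theory Num.Theory.
Local Open Scope classical_set_scope.
Local Open Scope ring_scope.

Definition scons (R : Type) (x : R) (s : nat -> R) : nat -> R :=
  fun i => match i with O => x | S j => s j end.

Fixpoint cube_int (R : realType) (n : nat) (t : R)
  (F : (nat -> R) -> \bar R) : \bar R :=
  match n with
  | O => F (fun _ => 0)
  | S n' => (\int[@lebesgue_measure R]_(x in `[0%R, t]%classic)
               cube_int n' t (fun s => F (scons x s)))%E
  end.

(* Phi_m with variables s_1..s_m stored as s 0 .. s (m-1); cyclic convention
   s_{m+1} = s_1 becomes index (k+1) %% m. *)
Definition Phi (R : realType) (mm lam eps : R) (m : nat) (s : nat -> R) : R :=
  \prod_(k < m)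
     (lam ^+ 2 * expR (mm * (s k + s ((k.+1) %% m)%N)) /
      (2 * pi * (s k + s ((k.+1) %% m)%N + 2 * eps ^+ 2))).

(* Main.v *)
Require Import Defs.
From HB Require Import structures.
From mathcomp Require Import all_boot all_order all_algebra.
From mathcomp Require Import all_classical all_reals all_analysis.
From mathcomp Require Import ring lra.
Set Implicit Arguments. Unset Strict Implicit.
Import Order.TTheory GRing.Theory Num.Theory numFieldNormedType.Exports.
Local Open Scope classical_set_scope.
Local Open Scope ring_scope.

Lemma int_le (R : realType) (D : set R) (f g : R -> \bar R) :
  (forall x, D x -> (0 <= f x)%E) -> (forall x, D x -> (f x <= g x)%E) ->
  (\int[@lebesgue_measure R]_(x in D) f x <= \int[@lebesgue_measure R]_(x in D) g x)%E.
Proof.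
move=> f0 fg.
have g0 : forall x, D x -> (0 <= g x)%E by move=> x Dx; exact: le_trans (f0 x Dx) (fg x Dx).
rewrite [X in (X <= _)%E]ge0_integralE; last exact: f0.
rewrite [X in (_ <= X)%E]ge0_integralE; last exact: g0.
apply: ge_ereal_sup => _ [h hf <-]; apply: ereal_sup_ubound; exists h => // x.
apply: le_trans (hf x) _.
rewrite /patch; case: ifP => // /[1!inE] Dx; exact: fg.
Qed.

Definition incube (R : realType) (t : R) (s : nat -> R) := forall i, 0 <= s i <= t.

Arguments incube {R}.

Lemma incube_scons (R : realType) (t x : R) s :
  0 <= x <= t -> incube t s -> incube t (scons x s).
Proof. by move=> hx hs [|i] //=. Qed.

Lemma incube0 (R : realType) (t : R) : 0 <= t -> incube t (fun _ => 0).
Proof. by move=> t0 i; rewrite lexx t0. Qed.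

Lemma cube_int_ge0 (R : realType) (t : R) n F : 0 <= t ->
  (forall s, incube t s -> (0 <= F s)%E) -> (0 <= cube_int n t F)%E.
Proof.
move=> t0; elim: n F => [|n IH] F F0 /=; first exact/F0/incube0.
apply: integral_ge0 => x /= /[!in_itv] /= hx.
apply: IH => s hs; apply: F0; exact: incube_scons.
Qed.

Lemma cube_int_le (R : realType) (t : R) n F G : 0 <= t ->
  (forall s, incube t s -> (0 <= F s)%E) ->
  (forall s, incube t s -> (F s <= G s)%E) -> (cube_int n t F <= cube_int n t G)%E.
Proof.
move=> t0; elim: n F G => [|n IH] F G F0 FG /=; first exact/FG/incube0.
apply: int_le => x /= /[!in_itv] /= hx.
  apply: cube_int_ge0 => // s hs; apply: F0; exact: incube_scons.
apply: IH => s hs; [apply: F0|apply: FG]; exact: incube_scons.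
Qed.

Lemma dshift (R : realType) (b y : R) : is_derive y 1 (fun z : R => z + b) 1.
Proof.
have h := is_deriveD (is_derive_id y 1) (is_derive_cst b y 1).
rewrite addr0 in h; exact: h.
Qed.

Definition Fat (R : realType) (a b c : R) :=
  fun z => c * (2 / Num.sqrt a) * atan (Num.sqrt (z + b) / Num.sqrt a).

Lemma dF (R : realType) (a b c y : R) : 0 < a -> 0 < y + b ->
  is_derive y 1 (Fat a b c)
    (c / ((a + (y + b)) * Num.sqrt (y + b))).
Proof.
move=> a0 yb; rewrite /Fat.
have d2 := is_derive1_comp (g := fun z => z + b) (x := y) (is_derive1_sqrt yb) (@dshift R b y).
have d3 := is_deriveM d2 (is_derive_cst (Num.sqrt a)^-1 y 1).
have d4 := is_derive1_comp (is_derive1_atan _) d3.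
have d5 := is_deriveM (is_derive_cst (c * (2 / Num.sqrt a)) y 1) d4.

have -> : (fun z => c * (2 / Num.sqrt a) * atan (Num.sqrt (z + b) / Num.sqrt a)) =
  (cst (c * (2 / Num.sqrt a)) * (atan \o (Num.sqrt \o (fun z => z + b)) * cst (Num.sqrt a)^-1)) by [].
apply: is_derive_eq d5 _.
rewrite /= !scaler0 !addr0 mulr1.
transitivity (c * (2 / Num.sqrt a) * ((1 + (Num.sqrt (y + b) / Num.sqrt a) ^+ 2)^-1 *
   ((Num.sqrt a)^-1 * (2 * Num.sqrt (y + b))^-1))).
  by rewrite add0r.
have sa : 0 < Num.sqrt a by rewrite sqrtr_gt0.
have sy : 0 < Num.sqrt (y + b) by rewrite sqrtr_gt0.
rewrite expr_div_n !sqr_sqrtr ?ltW //.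
have ea : a = Num.sqrt a ^+ 2 by rewrite sqr_sqrtr ?ltW.
move: (Num.sqrt (y + b)) sy => q hq.
move: (Num.sqrt a) ea sa => s -> hs.
have h1 : s ^+ 2 + (y + b) != 0 by rewrite gt_eqF // addr_gt0 // exprn_gt0.
by field; rewrite h1 !gt_eqF.
Qed.

Lemma cont_of_derive (R : realType) (g : R -> R) (y d : R) :
  is_derive y 1 g d -> {for y, continuous g}.
Proof.
case=> hd _; move: hd.
move/derivable1_diffP; exact: differentiable_continuous.
Qed.

Lemma schur (R : realType) (a b c t : R) : 0 < a -> 0 < b -> 0 <= c -> 0 < t ->
  (\int[@lebesgue_measure R]_(y in `[0%R, t]%classic) (c / ((a + (y + b)) * Num.sqrt (y + b)))%:E
    <= (c * pi / Num.sqrt a)%:E)%E.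
Proof.
move=> a0 b0 c0 t0.
have yb : forall y, 0 <= y -> 0 < y + b by move=> y y0; exact: ltr_wpDl.
rewrite (@continuous_FTC2 _ _ (Fat a b c)) //.
- rewrite -EFinB lee_fin /Fat.
  have sa : 0 < Num.sqrt a by rewrite sqrtr_gt0.
  have h0 : 0 <= c * (2 / Num.sqrt a) * atan (Num.sqrt (0 + b) / Num.sqrt a).
    apply: mulr_ge0; first by apply: mulr_ge0 => //; rewrite divr_ge0 // ltW.
    rewrite -(atan0 R); apply: le_atan; rewrite divr_ge0 // ?sqrtr_ge0 // ltW.
  have ht : c * (2 / Num.sqrt a) * atan (Num.sqrt (t + b) / Num.sqrt a) <=
    c * (2 / Num.sqrt a) * (pi / 2).
    apply: ler_wpM2l; first by apply: mulr_ge0 => //; rewrite divr_ge0 // ltW.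
    exact/ltW/atan_ltpi2.
  have e : c * (2 / Num.sqrt a) * (pi / 2) = c * pi / Num.sqrt a.
    by field; rewrite gt_eqF.
  rewrite -e; move: h0 ht; rewrite /=; lra.
- apply: continuous_in_subspaceT => y /[1!inE] /= /[1!in_itv] /= /andP[y0 _].
  have hy := yb y y0.
  apply: (@continuousM _ _ (cst c) (fun z => ((a + (z + b)) * Num.sqrt (z + b))^-1)).
    exact: cvg_cst.
  apply: (@continuousV _ _ (fun z => (a + (z + b)) * Num.sqrt (z + b))); first by rewrite gt_eqF // mulr_gt0 ?sqrtr_gt0 // addr_gt0.
  apply: (@continuousM _ _ (fun z => a + (z + b)) (fun z => Num.sqrt (z + b))).
    apply: cont_of_derive (is_deriveD (is_derive_cst a y 1) (dshift b y)).
  apply: (@continuous_comp _ _ _ (fun z => z + b) Num.sqrt).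
    exact: cont_of_derive (dshift b y).
  exact: sqrt_continuous.
- split.
  + move=> y /[1!in_itv] /= /andP[y0 _].
    have := dF c a0 (yb y (ltW y0)); by case.
  + have := cont_of_derive (dF c a0 (yb 0 (lexx 0))).
    exact: cvg_at_right_filter.
  + have := cont_of_derive (dF c a0 (yb t (ltW t0))).
    exact: cvg_at_left_filter.
- move=> y /[1!in_itv] /= /andP[y0 _]; rewrite derive1E; apply: derive_val.
  apply: dF => //; exact/yb/ltW.
Qed.


Definition Gln (R : realType) (b c : R) := fun z => c * @ln R (z + b).

Lemma dG (R : realType) (b c y : R) : 0 < y + b ->
  is_derive y 1 (Gln b c) (c / (y + b)).
Proof.
move=> yb.
have h1 : is_derive (y + b) (1:R) (@ln R) (y + b)^-1 by exact: is_derive1_ln.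
have d2 := is_derive1_comp (g := fun z => z + b) (x := y) h1 (@dshift R b y).
have d5 := is_deriveM (is_derive_cst c y 1) d2.
have -> : Gln b c = (cst c * (@ln R \o (fun z => z + b))) by [].
apply: is_derive_eq d5 _.
rewrite /= !scaler0 !addr0 mulr1; by [].
Qed.

Lemma logint (R : realType) (b c t : R) : 0 < b -> 0 < t ->
  (\int[@lebesgue_measure R]_(y in `[0%R, t]%classic) (c / (y + b))%:E
    = (c * @ln R (1 + t / b))%:E)%E.
Proof.
move=> b0 t0.
have yb : forall y, 0 <= y -> 0 < y + b by move=> y y0; exact: ltr_wpDl.
rewrite (@continuous_FTC2 _ _ (Gln b c)) //.
- rewrite -EFinB /Gln; congr EFin; rewrite add0r -mulrBr; congr (_ * _).
  rewrite -ln_div ?posrE ?yb ?ltW //; congr ln.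
  by rewrite mulrDl divff ?gt_eqF // addrC.
- apply: continuous_in_subspaceT => y /[1!inE] /= /[1!in_itv] /= /andP[y0 _].
  apply: (@continuousM _ _ (cst c) (fun z => (z + b)^-1)).
    exact: cvg_cst.
  apply: (@continuousV _ _ (fun z => z + b)); first by rewrite gt_eqF // yb.
  exact: cont_of_derive (dshift b y).
- split.
  + move=> y /[1!in_itv] /= /andP[y0 _].
    have := dG c (yb y (ltW y0)); by case.
  + have := cont_of_derive (dG c (yb 0 (lexx 0))).
    exact: cvg_at_right_filter.
  + have := cont_of_derive (dG c (yb t (ltW t0))).
    exact: cvg_at_left_filter.
- move=> y /[1!in_itv] /= /andP[y0 _]; rewrite derive1E.
  by case: (dG c (yb y (ltW y0))).
Qed.

Definition Kk (R : realType) (b x y : R) := (x + y + 2 * b)^-1.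
Definition ww (R : realType) (b x : R) := (Num.sqrt (x + b))^-1.
Definition Gch (R : realType) (b : R) (n : nat) (s : nat -> R) :=
  (\prod_(k < n) Kk b (s k) (s k.+1)) * ww b (s n).

Lemma Kk_gt0 (R : realType) (b x y : R) : 0 < b -> 0 <= x -> 0 <= y -> 0 < Kk b x y.
Proof. by move=> b0 x0 y0; rewrite invr_gt0; lra. Qed.

Lemma ww_gt0 (R : realType) (b x : R) : 0 < b -> 0 <= x -> 0 < ww b x.
Proof. by move=> b0 x0; rewrite invr_gt0 sqrtr_gt0; lra. Qed.

Lemma Gch_ge0 (R : realType) (b : R) n s : 0 < b -> (forall i, 0 <= s i) -> 0 <= Gch b n s.
Proof.
move=> b0 s0; rewrite /Gch; apply: mulr_ge0; last exact/ltW/ww_gt0.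
by apply: prodr_ge0 => k _; apply/ltW/Kk_gt0.
Qed.

Lemma chain (R : realType) (b t : R) (n : nat) : 0 < b -> 0 < t -> forall c x, 0 <= c -> 0 <= x ->
  (cube_int n t (fun s => (c * Gch b n (scons x s))%:E) <= (c * pi ^+ n * ww b x)%:E)%E.
Proof.
move=> b0 t0; elim: n => [|n IH] c x c0 x0.
  by rewrite /= /Gch big_ord0 mul1r expr0 mulr1.
rewrite [cube_int _ _ _]/=.
apply: le_trans.
  apply: (@int_le _ _ _ (fun y => (c * Kk b x y * pi ^+ n * ww b y)%:E)).
    move=> y /= /[1!in_itv] /= /andP[y0 yt].
    apply: cube_int_ge0; first exact: ltW.
    move=> s hs; rewrite lee_fin mulr_ge0 // Gch_ge0 //.
    by case=> [|[|i]] //=; have /andP[] := hs i.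
  move=> y /= /[1!in_itv] /= /andP[y0 yt].
  have -> : (fun s => (c * Gch b n.+1 (scons x (scons y s)))%:E) =
            (fun s => (c * Kk b x y * Gch b n (scons y s))%:E).
    apply: funext => s; congr EFin; rewrite -mulrA; congr (_ * _).
    rewrite /Gch big_ord_recl /= mulrA; congr (_ * _ * _).
  apply: IH => //; apply: mulr_ge0 => //; exact/ltW/Kk_gt0.
have HH : forall z, c * Kk b x z * pi ^+ n * ww b z =
   (c * pi ^+ n) / ((x + b + (z + b)) * Num.sqrt (z + b)).
  move=> z.
  rewrite /Kk /ww invfM !mulrA; congr (_ * _).
  rewrite -!mulrA; congr (_ * _); rewrite mulrC; congr (_ * _).
  by congr (_^-1); ring.
under eq_integral => z _ do rewrite HH.
apply: le_trans; first apply: schur.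
- by rewrite ltr_wpDl.
- exact: b0.
- by apply: mulr_ge0 => //; apply/exprn_ge0/ltW/pi_gt0.
- exact: t0.
rewrite lee_fin /ww exprS le_eqVlt; apply/orP; left; apply/eqP; ring.
Qed.

Lemma prod_CK (R : realType) (C : R) (g : nat -> R) n :
  \prod_(i < n) (C * g i) = C ^+ n * \prod_(i < n) g i.
Proof.
elim: n => [|n IH]; first by rewrite !big_ord0 expr0 mulr1.
by rewrite !big_ord_recr /= IH exprSr; ring.
Qed.

Lemma amgm (R : realType) (b x y : R) : 0 < b -> 0 <= x -> 0 <= y ->
  Kk b x y <= ww b x * ww b y / 2.
Proof.
move=> b0 x0 y0.
have px : 0 < Num.sqrt (x + b) by rewrite sqrtr_gt0; lra.
have py : 0 < Num.sqrt (y + b) by rewrite sqrtr_gt0; lra.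
have ex : x + b = Num.sqrt (x + b) ^+ 2 by rewrite sqr_sqrtr //; lra.
have ey : y + b = Num.sqrt (y + b) ^+ 2 by rewrite sqr_sqrtr //; lra.
rewrite /Kk /ww.
have -> : x + y + 2 * b = Num.sqrt (x + b) ^+ 2 + Num.sqrt (y + b) ^+ 2 by rewrite -ex -ey; ring.
move: (Num.sqrt (x + b)) (Num.sqrt (y + b)) px py => p q hp hq.
have -> : p^-1 * q^-1 / 2 = (2 * p * q)^-1 by field; rewrite !gt_eqF.
rewrite lef_pV2 ?posrE; first by have := sqr_ge0 (p - q); nra.
- by rewrite addr_gt0 // exprn_gt0.
- by rewrite !mulr_gt0.
Qed.

Local Close Scope classical_set_scope.
Unset Implicit Arguments.

Theorem mainTheorem9 (R : realType) (mm lam eps t : R) (m : nat)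
  (hlam : 0 < lam) (heps : 0 < eps) (ht : 0 < t) (hm : (1 <= m)%N) :
  (cube_int m t (fun s => (Phi mm lam eps m s)%:E) <=
   ((lam * expR (Num.max mm 0 * t)) ^+ (2 * m) / (2 ^+ m * pi)
      * ln (1 + t / eps ^+ 2))%:E)%E.
Proof.
case: m hm => [//|n] _.
have b0 : 0 < eps ^+ 2 by rewrite exprn_gt0.
have pi0 : 0 < pi :> R := pi_gt0 R.
set M := Num.max mm 0.
set E := expR (M * t).
set C := lam ^+ 2 * E ^+ 2 / (2 * pi).
have C0 : 0 <= C by rewrite /C divr_ge0 ?mulr_ge0 ?exprn_ge0 ?expR_ge0 // ltW.
have fb : forall x y, 0 <= x <= t -> 0 <= y <= t ->
   0 <= lam ^+ 2 * expR (mm * (x + y)) / (2 * pi * (x + y + 2 * eps ^+ 2)) <=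
   C * Kk (eps ^+ 2) x y.
  move=> x y /andP[x0 xt] /andP[y0 yt].
  have K0 : 0 < x + y + 2 * eps ^+ 2 by lra.
  have eL : lam ^+ 2 * expR (mm * (x + y)) / (2 * pi * (x + y + 2 * eps ^+ 2)) =
     (lam ^+ 2 / (2 * pi) * (x + y + 2 * eps ^+ 2)^-1) * expR (mm * (x + y)).
    by move: (pi : R) pi0 => P P0; field; rewrite !gt_eqF.
  have eR : C * Kk (eps ^+ 2) x y =
     (lam ^+ 2 / (2 * pi) * (x + y + 2 * eps ^+ 2)^-1) * E ^+ 2.
    by rewrite /C /Kk; move: (pi : R) pi0 => P P0; field; rewrite !gt_eqF.
  have A0 : 0 <= lam ^+ 2 / (2 * pi) * (x + y + 2 * eps ^+ 2)^-1.
    by rewrite mulr_ge0 ?divr_ge0 ?exprn_ge0 ?invr_ge0 ?mulr_ge0 ?ltW.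
  rewrite eL eR; apply/andP; split; first by rewrite mulr_ge0 ?expR_ge0.
  apply: ler_wpM2l => //.
  rewrite /E expr2 -expRD ler_expR.
  have M0 : 0 <= M by rewrite /M le_max lexx orbT.
  have mM : mm <= M by rewrite /M le_max lexx.
  apply: (le_trans (y := M * (x + y))); first by apply: ler_wpM2r => //; lra.
  by rewrite -mulrDr; apply: ler_wpM2l => //; lra.
have Phi_le : forall s, incube t s ->
  0 <= Phi mm lam eps n.+1 s <= C ^+ n.+1 / 2 * ww (eps ^+ 2) (s 0) * Gch (eps ^+ 2) n s.
  move=> s hs.
  have s0 : forall i, 0 <= s i by move=> i; have /andP[] := hs i.
  rewrite /Phi big_ord_recr /= modnn.
  under eq_bigr => i _ do rewrite (@modn_small i.+1 n.+1) ?ltnS //.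
  have hP1 : 0 <= \prod_(i < n)
     (lam ^+ 2 * expR (mm * (s i + s i.+1)) /
      (2 * pi * (s i + s i.+1 + 2 * eps ^+ 2))) <=
      C ^+ n * \prod_(i < n) Kk (eps ^+ 2) (s i) (s i.+1).
    rewrite -(prod_CK C (fun i => Kk (eps ^+ 2) (s i) (s i.+1))); apply/andP; split.
      by apply: prodr_ge0 => i _; have /andP[] := fb (s i) (s i.+1) (hs i) (hs i.+1).
    by apply: ler_prod => i _; exact: fb.
  have hFl : 0 <= lam ^+ 2 * expR (mm * (s n + s 0%N)) /
      (2 * pi * (s n + s 0%N + 2 * eps ^+ 2)) <=
      C * (ww (eps ^+ 2) (s n) * ww (eps ^+ 2) (s 0) / 2).
    have /andP[h1 h2] := fb (s n) (s 0) (hs n) (hs 0).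
    rewrite h1 /=; apply: le_trans h2 _; apply: ler_wpM2l => //.
    exact: amgm.
  case/andP: hP1 => hP1a hP1b; case/andP: hFl => hFa hFb.
  rewrite mulr_ge0 //=.
  apply: le_trans; first exact: ler_pM hP1a hFa hP1b hFb.
  rewrite le_eqVlt; apply/orP; left; apply/eqP.
  by rewrite /Gch [C ^+ n.+1]exprS; field.
apply: le_trans.
  apply: (@cube_int_le R t n.+1 _ (fun s => (C ^+ n.+1 / 2 * ww (eps ^+ 2) (s 0) * Gch (eps ^+ 2) n s)%:E)).
  - exact: ltW.
  - by move=> s hs; rewrite lee_fin; have /andP[] := Phi_le s hs.
  - by move=> s hs; rewrite lee_fin; have /andP[] := Phi_le s hs.
rewrite [cube_int _ _ _]/=.
have D0 : 0 <= C ^+ n.+1 / 2 by rewrite divr_ge0 ?exprn_ge0.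
apply: le_trans.
  apply: (int_le (g := fun x => (C ^+ n.+1 / 2 * ww (eps ^+ 2) x * pi ^+ n * ww (eps ^+ 2) x)%:E)).
    move=> x /= /[1!in_itv] /= /andP[x0 xt].
    apply: cube_int_ge0; first exact: ltW.
    move=> s hs; rewrite lee_fin; apply: mulr_ge0; first by apply: mulr_ge0 => //; exact/ltW/ww_gt0.
    apply: Gch_ge0 => // -[|i] //=; by have /andP[] := hs i.
  move=> x /= /[1!in_itv] /= /andP[x0 xt].
  apply: (@chain R (eps ^+ 2) t n b0 ht (C ^+ n.+1 / 2 * ww (eps ^+ 2) x) x) => //.
  by apply: mulr_ge0 => //; exact/ltW/ww_gt0.
have HH : forall x, 0 <= x -> C ^+ n.+1 / 2 * ww (eps ^+ 2) x * pi ^+ n * ww (eps ^+ 2) x =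
    (C ^+ n.+1 / 2 * pi ^+ n) / (x + eps ^+ 2).
  move=> x x0; rewrite /ww.
  have ex : Num.sqrt (x + eps ^+ 2) ^+ 2 = x + eps ^+ 2 by rewrite sqr_sqrtr //; lra.
  have hq : 0 < Num.sqrt (x + eps ^+ 2) by rewrite sqrtr_gt0; lra.
  rewrite -[in RHS]ex; move: (Num.sqrt (x + eps ^+ 2)) hq => q hq.
  by field; rewrite gt_eqF.
under eq_integral => x.
  move=> /[1!inE] /= /[1!in_itv] /= /andP[x0 _]; rewrite HH //; over.
rewrite logint // lee_fin.
have L0 : 0 <= ln (1 + t / eps ^+ 2) by apply: ln_ge0; rewrite lerDl divr_ge0 // ltW.
have eqK : C ^+ n.+1 / 2 * pi ^+ n = (lam * E) ^+ (2 * n.+1) / (2 ^+ n.+1 * pi) / 2.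
  rewrite /C exprM !exprMn !exprVn !exprMn [pi ^+ n.+1]exprS.
  move: (pi : R) pi0 => P P0.
  by field; rewrite !expf_neq0 ?gt_eqF.
rewrite eqK.
have Y0 : 0 <= (lam * E) ^+ (2 * n.+1) / (2 ^+ n.+1 * pi).
  apply: divr_ge0; first by apply: exprn_ge0; apply: mulr_ge0; [exact: ltW | exact: expR_ge0].
  by apply: mulr_ge0; [exact: exprn_ge0 | exact: ltW].
move: ((lam * E) ^+ (2 * n.+1) / (2 ^+ n.+1 * pi)) Y0 => Y Y0.
move: (ln (1 + t / eps ^+ 2)) L0 => L L0.
by nra.
Qed.
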